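(* Let $TT_n$ be the transitive tournament on $n$ vertices and let $(\alpha_1,\alpha_2)\in\mathbb{Z}^2$ with $\alpha_1\alpha_2<0$, $|\alpha_1|\neq|\alpha_2|$ and $|\alpha_1|+|\alpha_2|=n-1$. Then the number of oriented paths of type $P(\alpha_1,\alpha_2)$ in $TT_n$ is $\binom{n-1}{|\alpha_1|}$.
   Context: The transitive tournament $TT_n$ has vertices $v_1,\dots,v_n$ and arcs $(v_i,v_j)$ for all $i<j$. An oriented path is a digraph whose underlying graph is a path; a block is a maximal directed subpath. An oriented path $P$ is of type $P(\alpha_1,\alpha_2)$ if $P$ is the concatenation of two blocks $I_1,I_2$, where $I_i$ has ends $x_i,y_i$, $I_1\cap I_2=\{y_1\}=\{x_2\}$, $I_i$ has length $|\alpha_i|$, and $\alpha_i>0$ iff $I_i$ is directed from $x_i$ to $y_i$. Paths are counted as distinct when their arc sets differ. *)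

(* Defs.v *)
From mathcomp Require Import all_boot all_order all_algebra.
Set Implicit Arguments. Unset Strict Implicit. Unset Printing Implicit Defensive.
Import Order.TTheory GRing.Theory Num.Theory.

Definition TT (n : nat) : rel 'I_n := fun u v => (u < v)%N.

(* Arc set of the oriented path with vertex sequence p_0, ..., p_{|a1|+|a2|}:
   the i-th edge {p_i, p_{i+1}} belongs to block I_1 if i < |a1|, else to I_2;
   it is oriented forward (p_i -> p_{i+1}) iff the sign of the block's
   alpha is positive. *)
Definition path_arcs (T : finType) (a1 a2 : int)
    (p : {ffun 'I_(`|a1| + `|a2|).+1 -> T}) : {set T * T} :=
  [set (let u := p (inord i) in let v := p (inord i.+1) in
        if (i < `|a1|)%N then (if (0 < a1)%R then (u, v) else (v, u))
        else (if (0 < a2)%R then (u, v) else (v, u)))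
   | i : 'I_(`|a1| + `|a2|)].

(* A is (the arc set of) an oriented path of type P(a1,a2) in the digraph D:
   both blocks are nonempty and of opposite directions (so both are maximal
   directed subpaths), the vertices are pairwise distinct, and all arcs are
   arcs of D. *)
Definition is_path_of_type (T : finType) (D : rel T) (a1 a2 : int)
    (A : {set T * T}) : bool :=
  [&& a1 != 0%R, a2 != 0%R, (0 < a1)%R != (0 < a2)%R &
   [exists p : {ffun 'I_(`|a1| + `|a2|).+1 -> T},
     [&& injectiveb p, A == path_arcs p & [forall e in A, D e.1 e.2]]]].

(* Main.v *)
Require Import Defs.
From mathcomp Require Import all_boot all_order all_algebra.
From mathcomp Require Import zify.
Import Order.TTheory GRing.Theory Num.Theory.
Set Implicit Arguments. Unset Strict Implicit. Unset Printing Implicit Defensive.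

Definition Rb (b : bool) (N : nat) (x y : 'I_N) : bool :=
  if b then (x < y)%N else (y < x)%N.

Lemma Rb_irr b N (x : 'I_N) : Rb b x x = false.
Proof. by rewrite /Rb; case: b; rewrite ltnn. Qed.

Lemma Rb_trans b N (x y z : 'I_N) : Rb b x y -> Rb b y z -> Rb b x z.
Proof. rewrite /Rb; case: b => /= H1 H2; lia. Qed.

Lemma Rb_total b N (x y : 'I_N) : x != y -> Rb b x y || Rb b y x.
Proof.
rewrite /Rb -val_eqE /= => H; case: b; lia.
Qed.

Lemma Rb_asym b N (x y : 'I_N) : Rb b x y -> Rb b y x = false.
Proof. rewrite /Rb; case: b => /= H; apply/negbTE; lia. Qed.

Definition ext b n : 'I_n.+1 := if b then ord_max else ord0.

Lemma Rb_ext b n (x : 'I_n.+1) : x != ext b n -> Rb b x (ext b n).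
Proof.
rewrite /Rb /ext -val_eqE; case: b => /= H; have := ltn_ord x; lia.
Qed.

Lemma Rb_ext' b n (x : 'I_n.+1) : Rb b (ext b n) x = false.
Proof.
rewrite /Rb /ext; case: b => /=; apply/negbTE; have := ltn_ord x; lia.
Qed.

Lemma card_lt N c : (c <= N)%N -> #|[set i : 'I_N | (i < c)%N]| = c.
Proof.
move=> H.
have -> : [set i : 'I_N | (i < c)%N] = (widen_ord H) @: [set: 'I_c].
  apply/setP => i; rewrite inE; apply/idP/imsetP.
    by move=> Hi; exists (Ordinal Hi) => //; apply/val_inj.
  by case=> j _ ->; rewrite /= ltn_ord.
rewrite card_imset ?cardsT ?card_ord //.
by move=> x y /(congr1 val) /= /val_inj.
Qed.

Lemma rank_eq (T : finType) (S : {set T}) (r : rel T)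
  (rtr : forall x y z, r x y -> r y z -> r x z)
  (rir : forall x, r x x = false)
  (rto : forall x y, x != y -> r x y || r y x) x y :
  x \in S -> y \in S ->
  #|[set z in S | r z x]| = #|[set z in S | r z y]| -> x = y.
Proof.
move=> xS yS Hc; apply/eqP/negPn/negP => /rto /orP.
have key : forall u v, u \in S -> r u v ->
   #|[set z in S | r z u]| < #|[set z in S | r z v]|.
  move=> u v uS ruv; apply: proper_card; apply/properP; split.
    by apply/subsetP => z; rewrite !inE => /andP[-> /rtr]; apply.
  by exists u; rewrite !inE ?uS ?rir ?ruv.
by case=> H; [have := key _ _ xS H | have := key _ _ yS H]; rewrite Hc ltnn.
Qed.

Definition valid k m b (p : {ffun 'I_(k+m).+1 -> 'I_(k+m).+1}) : bool :=
  injectiveb p && [forall i : 'I_(k+m), if (i < k)%N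
     then Rb b (p (inord i)) (p (inord i.+1))
     else Rb b (p (inord i.+1)) (p (inord i))].

Section V.
Variables (k m : nat) (b : bool) (p : {ffun 'I_(k+m).+1 -> 'I_(k+m).+1}).
Hypothesis vp : valid b p.

Lemma v_inj : injective p.
Proof. by case/andP: vp => /injectiveP. Qed.

Lemma v_stepL i : (i < k)%N -> Rb b (p (inord i)) (p (inord i.+1)).
Proof.
move=> H; case/andP: vp => _ /forallP.
have Hi : (i < k + m)%N by lia.
by move/(_ (Ordinal Hi)) => /=; rewrite H.
Qed.

Lemma v_stepR i : (k <= i)%N -> (i < k + m)%N -> Rb b (p (inord i.+1)) (p (inord i)).
Proof.
move=> H Hi; case/andP: vp => _ /forallP.
by move/(_ (Ordinal Hi)) => /=; rewrite ltnNge H.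
Qed.

Lemma v_monoL j i : (i < j)%N -> (j <= k)%N -> Rb b (p (inord i)) (p (inord j)).
Proof.
elim: j => [//|j IH] Hij Hj.
have s := v_stepL (i:=j) Hj.
case: (ltngtP i j) => Hc.
- by apply: Rb_trans (IH Hc (ltnW Hj)) s.
- lia.
- by rewrite Hc.
Qed.

Lemma v_monoR j i : (k <= i)%N -> (i < j)%N -> (j <= k + m)%N ->
  Rb b (p (inord j)) (p (inord i)).
Proof.
move=> Hk; elim: j => [//|j IH] Hij Hj.
have Hkj : (k <= j)%N by lia.
have s := v_stepR Hkj Hj.
case: (ltngtP i j) => Hc.
- by apply: Rb_trans s (IH Hc (ltnW Hj)).
- lia.
- by rewrite Hc.
Qed.

Lemma v_peak : p (inord k) = ext b (k + m).
Proof.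
set c := invF v_inj (ext b (k+m)).
have pc : p c = ext b (k+m) by rewrite /c f_invF.
have pc' : p (inord c) = ext b (k+m) by rewrite inord_val.
case: (ltngtP c k) => Hc.
- by have := v_monoL Hc (leqnn k); rewrite pc' Rb_ext'.
- have := v_monoR (leqnn k) Hc; rewrite pc' Rb_ext' => H.
  by have := H (ltn_ord c).
- by have -> : (inord k : 'I_(k+m).+1) = inord c by rewrite Hc.
Qed.

End V.

Definition G (k m : nat) (p : {ffun 'I_(k+m).+1 -> 'I_(k+m).+1}) : {set 'I_(k+m).+1} :=
  p @: [set i : 'I_(k+m).+1 | (i < k)%N].
Arguments G k m p : clear implicits.

Section V2.
Variables (k m : nat) (b : bool) (p : {ffun 'I_(k+m).+1 -> 'I_(k+m).+1}).
Hypothesis vp : valid b p.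

Lemma pinord (a : 'I_(k+m).+1) : p a = p (inord a).
Proof. by rewrite inord_val. Qed.

Lemma G_card : #|G k m p| = k.
Proof. by rewrite card_imset ?card_lt //; [lia | apply: v_inj vp]. Qed.

Lemma G_sub : G k m p \subset [set~ ext b (k+m)].
Proof.
apply/subsetP => z /imsetP [j]; rewrite inE => Hj ->; rewrite !inE.
rewrite -(v_peak vp) (inj_eq (v_inj vp)) -val_eqE /= inordK; lia.
Qed.

Lemma G_comp : [set~ ext b (k+m)] :\: G k m p = p @: [set i : 'I_(k+m).+1 | (k < i)%N].
Proof.
apply/setP => z; rewrite !inE; apply/idP/imsetP.
  move=> /andP [Hz Hne].
  exists (invF (v_inj vp) z); last by rewrite f_invF.
  set c := invF (v_inj vp) z.
  have pc : p c = z by rewrite f_invF.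
  rewrite inE; case: (ltngtP k c) => // Hc.
  - by move: Hz; rewrite -pc; case/negP; apply: imset_f; rewrite inE.
  - move: Hne; rewrite -(v_peak vp) -pc pinord.
    by rewrite -Hc eqxx.
case=> j; rewrite inE => Hj ->; apply/andP; split.
  apply/imsetP => [[j']]; rewrite inE => Hj' /(v_inj vp) E; move: Hj Hj'; rewrite E; lia.
by rewrite -(v_peak vp) (inj_eq (v_inj vp)) -val_eqE /= inordK; lia.
Qed.

Lemma rankL i : (i < k)%N ->
  #|[set z in G k m p | Rb b z (p (inord i))]| = i.
Proof.
move=> Hi.
have -> : [set z in G k m p | Rb b z (p (inord i))] = p @: [set j : 'I_(k+m).+1 | (j < i)%N].
  apply/setP => z; rewrite !inE; apply/andP/imsetP.
    case=> /imsetP [j]; rewrite inE => Hj -> HR; exists j => //; rewrite inE.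
    case: (ltngtP j i) => // Hc.
      by move: HR; rewrite pinord Rb_asym // v_monoL //; lia.
by move: HR; rewrite pinord -Hc Rb_irr.
  case=> j; rewrite inE => Hj ->; split.
    by apply: imset_f; rewrite inE; lia.
  by rewrite pinord; apply: v_monoL => //; lia.
rewrite card_imset ?card_lt //; [lia | apply: v_inj vp].
Qed.

Lemma rankR i : (k < i)%N -> (i < (k + m).+1)%N ->
  #|[set z in [set~ ext b (k+m)] :\: G k m p | Rb b z (p (inord i))]| = (k+m).+1 - i.+1.
Proof.
move=> Hi HiN; rewrite G_comp.
have -> : [set z in p @: [set i : 'I_(k+m).+1 | (k < i)%N] | Rb b z (p (inord i))]
   = p @: ~: [set j : 'I_(k+m).+1 | (j < i.+1)%N].
  apply/setP => z; rewrite !inE; apply/andP/imsetP.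
    case=> /imsetP [j]; rewrite inE => Hj -> HR; exists j => //; rewrite !inE -leqNgt.
    case: (ltngtP j i) => // Hc.
      by move: HR; rewrite pinord Rb_asym // v_monoR //; lia.
    by move: HR; rewrite pinord Hc Rb_irr.
  case=> j; rewrite !inE => Hj ->; split.
    by apply: imset_f; rewrite inE; lia.
  have := ltn_ord j; move: Hj; rewrite -leqNgt => Hj Hj2.
  by rewrite pinord; apply: v_monoR => //; lia.
rewrite card_imset; last by apply: v_inj vp.
by rewrite cardsCs setCK card_ord card_lt.
Qed.

End V2.

Lemma G_inj k m b (p q : {ffun 'I_(k+m).+1 -> 'I_(k+m).+1}) :
  valid b p -> valid b q -> G k m p = G k m q -> p = q.
Proof.
move=> vp vq E; apply/ffunP => a; rewrite (pinord p) (pinord q).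
have Ha := ltn_ord a.
have rtr := @Rb_trans b (k+m).+1.
have rir := @Rb_irr b (k+m).+1.
have rto := @Rb_total b (k+m).+1.
case: (ltngtP a k) => Hc.
- apply: (rank_eq rtr rir rto (S := G k m p)).
  + by apply: imset_f; rewrite inE inordK.
  + by rewrite E; apply: imset_f; rewrite inE inordK.
  + by rewrite rankL // E rankL.
- apply: (rank_eq rtr rir rto (S := [set~ ext b (k+m)] :\: G k m p)).
  + rewrite G_comp //; apply: imset_f; rewrite inE inordK //.
  + rewrite E G_comp //; apply: imset_f; rewrite inE inordK //.
  + by rewrite rankR // E rankR.
- by rewrite Hc (v_peak vp) (v_peak vq).
Qed.

Definition Rle (b : bool) (N : nat) (x y : 'I_N) : bool :=
  if b then (x <= y)%N else (y <= x)%N.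

Lemma Rle_total b N : total (@Rle b N).
Proof. by move=> x y; rewrite /Rle; case: b; apply: leq_total. Qed.

Lemma sortedR b N (x0 : 'I_N) (u : seq 'I_N) : sorted (@Rle b N) u -> uniq u ->
  forall i, (i.+1 < size u)%N -> Rb b (nth x0 u i) (nth x0 u i.+1).
Proof.
move=> /(sortedP x0) H U i Hi.
have R := H i Hi.
have E : nth x0 u i != nth x0 u i.+1 by rewrite nth_uniq ?(ltnW Hi) //; lia.
clear H; move: R E; rewrite -val_eqE /Rle /Rb; case: b => /= R E; lia.
Qed.

Lemma construct k m b (S : {set 'I_(k+m).+1}) :
  S \subset [set~ ext b (k+m)] -> #|S| = k ->
  exists2 p, valid b p & G k m p = S.
Proof.
move=> Ssub Scard.
set e := ext b (k+m).
set T := [set~ e] :\: S.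
have Tcard : #|T| = m by rewrite cardsDS // cardsC1 card_ord Scard; lia.
set s := sort (@Rle b _) (enum S).
set t := sort (@Rle b _) (enum T).
have ss : size s = k by rewrite size_sort -cardE.
have st : size t = m by rewrite size_sort -cardE.
have ms x : (x \in s) = (x \in S) by rewrite mem_sort mem_enum.
have mt x : (x \in t) = (x \in T) by rewrite mem_sort mem_enum.
have us : uniq s by rewrite sort_uniq enum_uniq.
have ut : uniq t by rewrite sort_uniq enum_uniq.
have sos : sorted (@Rle b _) s by apply: sort_sorted; apply: Rle_total.
have sot : sorted (@Rle b _) t by apply: sort_sorted; apply: Rle_total.
have eS : e \notin S by apply/negP => /(subsetP Ssub); rewrite !inE eqxx.
have eT : e \notin T by rewrite !inE eqxx andbF.
have sR x : x \in s -> Rb b x e.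
  by rewrite ms => /(subsetP Ssub); rewrite !inE => H; apply: Rb_ext.
have tR x : x \in t -> Rb b x e.
  by rewrite mt !inE => /andP [_ H]; apply: Rb_ext.
set L := s ++ e :: rev t.
have sL : size L = (k+m).+1 by rewrite size_cat /= size_rev ss st addnS.
have uL : uniq L.
  rewrite cat_uniq us /= rev_uniq ut mem_rev mt eT andbT /=.
  rewrite andbT ms (negbTE eS) /=; apply/hasPn => x; rewrite mem_rev mt ms.
  by rewrite !inE => /andP [/negbTE -> _].
exists [ffun i : 'I_(k+m).+1 => nth e L i].
  apply/andP; split.
    apply/injectiveP => x y; rewrite !ffunE => /eqP.
    by rewrite nth_uniq ?sL // => /eqP /val_inj.
  apply/forallP => i; have Hi := ltn_ord i; rewrite !ffunE !inordK; try lia.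
  rewrite /L !nth_cat ss.
  case: (ltnP i k) => Hik.
    case: (ltnP i.+1 k) => Hik1.
      by apply: sortedR => //; rewrite ss.
    have -> : i.+1 - k = 0 by lia.
    by apply: sR; apply: mem_nth; rewrite ss.
  rewrite ltnNge (_ : (k <= i.+1)%N = true) /=; last by lia.
  have -> : i.+1 - k = (i - k).+1 by lia.
  case: (posnP (i - k)) => H0.
    rewrite H0 /=.
    apply: tR; rewrite -mem_rev; apply: mem_nth; rewrite size_rev st; lia.
  rewrite /= (_ : i - k = (i - k - 1).+1); last by lia.
  rewrite /= !nth_rev ?st; try lia.
  have -> : m - (i - k - 1).+1 = (m - (i - k - 1).+2).+1 by lia.
  by apply: sortedR => //; rewrite st; lia.
apply/setP => x; apply/imsetP/idP.
  case=> j; rewrite inE => Hj ->; rewrite ffunE /L nth_cat ss Hj -ms.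
  by apply: mem_nth; rewrite ss.
rewrite -ms => /(nthP e) [i Hi <-].
have HiN : (i < (k+m).+1)%N by rewrite ss in Hi; lia.
exists (Ordinal HiN); first by rewrite inE /= -ss.
by rewrite ffunE /L nth_cat /= Hi.
Qed.

Definition adj (x y : nat) : bool := (x.+1 == y) || (y.+1 == x).

Lemma path_aut N (f : nat -> nat) : (1 < N)%N ->
  (forall a, (a < N)%N -> (f a < N)%N) ->
  (forall a c, (a < N)%N -> (c < N)%N -> f a = f c -> a = c) ->
  (forall a c, (a < N)%N -> (c < N)%N -> adj (f a) (f c) = adj a c) ->
  (forall a, (a < N)%N -> f a = a) \/ (forall a, (a < N)%N -> f a = N.-1 - a).
Proof.
move=> N1 fN finj fadj.
have A01 := fadj 0 1 (ltnW N1) N1; rewrite /adj /= in A01.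
case/orP: A01 => /eqP H01.
- have claim : forall i, (i.+1 < N)%N -> f i = f 0 + i /\ f i.+1 = f 0 + i.+1.
    elim=> [|i IH] Hi; first by split; [lia | rewrite -H01; lia].
    have [_ E] := IH (ltnW Hi); split => //.
    have := fadj i.+1 i.+2 (ltnW Hi) Hi; rewrite /adj eqxx /= => /orP [/eqP|/eqP] H.
      lia.
    have [E' _] := IH (ltnW Hi).
    have := finj i i.+2; lia.
  have [_ E] := claim N.-2 ltac:(lia).
  have := fN N.-1 ltac:(lia).
  rewrite (_ : N.-2.+1 = N.-1) in E; last by lia.
  rewrite E => H0; left => a Ha.
  case: a Ha => [|a] Ha; first by lia.
  have [_ ->] := claim a Ha; lia.
- have claim : forall i, (i.+1 < N)%N -> f i + i = f 0 /\ f i.+1 + i.+1 = f 0.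
    elim=> [|i IH] Hi; first by split; [lia | rewrite -H01; lia].
    have [_ E] := IH (ltnW Hi); split => //.
    have := fadj i.+1 i.+2 (ltnW Hi) Hi; rewrite /adj eqxx /= => /orP [/eqP|/eqP] H.
      have [E' _] := IH (ltnW Hi).
      have := finj i i.+2; lia.
    lia.
  have [_ E] := claim N.-2 ltac:(lia).
  have := fN 0 ltac:(lia).
  rewrite (_ : N.-2.+1 = N.-1) in E; last by lia.
  move=> H0; right => a Ha.
  case: a Ha => [|a] Ha; first by lia.
  have [_ E2] := claim a Ha.
  have := fN N.-1 ltac:(lia); lia.
Qed.

Definition und (T : finType) n (p : {ffun 'I_n.+1 -> T}) (x y : T) : bool :=
  [exists i : 'I_n, ((p (inord i), p (inord i.+1)) == (x, y))
                  || ((p (inord i), p (inord i.+1)) == (y, x))].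

Lemma und_pos (T : finType) n (p : {ffun 'I_n.+1 -> T}) (a c : 'I_n.+1) :
  injective p -> und p (p a) (p c) = adj a c.
Proof.
move=> pinj; apply/existsP/idP.
  case=> i /orP [] /eqP [] /pinj E1 /pinj E2; have Hi := ltn_ord i;
    move: (congr1 val E1) (congr1 val E2); rewrite /= !inordK /adj; lia.
rewrite /adj => /orP [] /eqP H.
  have Ha : (a < n)%N by have := ltn_ord c; lia.
  exists (Ordinal Ha); apply/orP; left => /=.
  rewrite inord_val; apply/eqP; congr (_, p _); apply/val_inj; rewrite /= inordK //; lia.
have Hc : (c < n)%N by have := ltn_ord a; lia.
exists (Ordinal Hc); apply/orP; right => /=.
rewrite inord_val; apply/eqP; congr (_, p _); apply/val_inj; rewrite /= inordK //; lia.
Qed.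

Lemma arcs_inj k m b (p q : {ffun 'I_(k+m).+1 -> 'I_(k+m).+1}) :
  (0 < k)%N -> k != m -> valid b p -> valid b q ->
  (forall x y, und p x y = und q x y) -> p = q.
Proof.
move=> k0 km vp vq U.
have pinj := v_inj vp; have qinj := v_inj vq.
set sig := fun a => invF qinj (p a).
have qs a : q (sig a) = p a by rewrite /sig f_invF.
have sinj : injective sig by move=> x y /(congr1 q); rewrite !qs => /pinj.
set f := fun a : nat => nat_of_ord (sig (inord a)).
have HN : (1 < (k+m).+1)%N by lia.
have fN a : (a < (k+m).+1)%N -> (f a < (k+m).+1)%N by move=> _; apply: ltn_ord.
have finj a c : (a < (k+m).+1)%N -> (c < (k+m).+1)%N -> f a = f c -> a = c.
  move=> Ha Hc H; have := congr1 (@nat_of_ord _) (sinj _ _ (val_inj H)); rewrite !inordK //.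
have fadj a c : (a < (k+m).+1)%N -> (c < (k+m).+1)%N -> adj (f a) (f c) = adj a c.
  move=> Ha Hc; rewrite /f -(und_pos (sig (inord a)) (sig (inord c)) qinj) !qs -U und_pos // !inordK //.
have sk : sig (inord k) = inord k by apply (qinj (sig (inord k)) (inord k)); rewrite qs (v_peak vp) (v_peak vq).
have fk : f k = k by rewrite /f sk inordK //; lia.
have key := @path_aut _ f HN fN finj fadj.
case: key => [H | H]; last first.
  by have := H k ltac:(lia); rewrite fk /=; move: km => /eqP; lia.
apply/ffunP => a; rewrite -(qs a).
congr (q _); apply/val_inj.
have := H a (ltn_ord a); rewrite /f inord_val //.
Qed.

Definition arc (T : finType) (a1 a2 : int) (p : {ffun 'I_(`|a1| + `|a2|).+1 -> T})
  (i : 'I_(`|a1| + `|a2|)) : T * T :=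
  let u := p (inord i) in let v := p (inord i.+1) in
  if (i < `|a1|)%N then (if (0 < a1)%R then (u, v) else (v, u))
  else (if (0 < a2)%R then (u, v) else (v, u)).

Lemma path_arcsE (T : finType) (a1 a2 : int) (p : {ffun 'I_(`|a1| + `|a2|).+1 -> T}) :
  path_arcs p = [set arc p i | i : 'I_(`|a1| + `|a2|)].
Proof. by []. Qed.

Lemma und_arcs (T : finType) (a1 a2 : int) (p : {ffun 'I_(`|a1| + `|a2|).+1 -> T}) x y :
  ((x, y) \in path_arcs p) || ((y, x) \in path_arcs p) = und p x y.
Proof.
rewrite path_arcsE; apply/idP/existsP.
  case/orP => /imsetP [i _ E]; exists i; move: E; rewrite /arc /=;
    do 2 case: ifP => _; case=> -> ->; rewrite !eqxx ?orbT //.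
case=> i /orP [] /eqP [Hx Hy]; apply/orP;
  case Hk : (i < `|a1|)%N; case Ha : (0 < a1)%R; case Hb : (0 < a2)%R;
  solve [ left; apply/imsetP; exists i => //; rewrite /arc Hk ?Ha ?Hb Hx Hy //
        | right; apply/imsetP; exists i => //; rewrite /arc Hk ?Ha ?Hb Hx Hy // ].
Qed.

Lemma arcTT (a1 a2 : int) n (p : {ffun 'I_(`|a1| + `|a2|).+1 -> 'I_n}) :
  (0 < a2)%R = ~~ (0 < a1)%R ->
  [forall e in path_arcs p, TT e.1 e.2] =
  [forall i : 'I_(`|a1| + `|a2|), if (i < `|a1|)%N
     then Rb (0 < a1)%R (p (inord i)) (p (inord i.+1))
     else Rb (0 < a1)%R (p (inord i.+1)) (p (inord i))].
Proof.
move=> sg; apply/forallP/forallP.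
  move=> H i; move/implyP: (H (arc p i)); rewrite path_arcsE imset_f // => /(_ isT).
  by rewrite /arc /TT /Rb sg; case: (i < _)%N; case: (0 < a1)%R.
move=> H e; apply/implyP; rewrite path_arcsE => /imsetP [i _ ->].
by have := H i; rewrite /arc /TT /Rb sg; case: (i < _)%N; case: (0 < a1)%R.
Qed.

Lemma count_valid k m b :
  #|[set p : {ffun 'I_(k+m).+1 -> 'I_(k+m).+1} | valid b p]| = 'C(k+m, k).
Proof.
have -> : 'C(k+m, k) = #|[set S : {set 'I_(k+m).+1} | S \subset [set~ ext b (k+m)] & #|S| == k]|.
  by rewrite cards_draws cardsC1 card_ord.
have <- : G k m @: [set p | valid b p] = [set S : {set 'I_(k+m).+1} | S \subset [set~ ext b (k+m)] & #|S| == k].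
  apply/setP => S; rewrite inE; apply/imsetP/andP.
    case=> p; rewrite inE => vp ->; split; first exact: G_sub vp.
    by rewrite (G_card vp).
  case=> Ssub /eqP Sc; have [p vp E] := construct Ssub Sc.
  by exists p; rewrite ?inE.
rewrite card_in_imset //.
move=> p q; rewrite !inE => vp vq; exact: G_inj vp vq.
Qed.

Theorem proposition2 (n : nat) (a1 a2 : int) :
  (a1 * a2 < 0)%R ->
  `|a1|%N != `|a2|%N ->
  (`|a1| + `|a2|)%N = n.-1 ->
  #|[set A : {set 'I_n * 'I_n} | is_path_of_type (@TT n) a1 a2 A]| = 'C(n.-1, `|a1|).
Proof.
move=> Hmul Hne Hsum.
have a10 : a1 != 0%R by apply/eqP => E; move: Hmul; rewrite E mul0r ltxx.
have a20 : a2 != 0%R by apply/eqP => E; move: Hmul; rewrite E mulr0 ltxx.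
have sg : (0 < a2)%R = ~~ (0 < a1)%R.
  case: (ltrP 0 a1) => H1; case: (ltrP 0 a2) => H2 //=; exfalso.
    by have := lt_trans Hmul (mulr_gt0 H1 H2); rewrite ltxx.
  by have := lt_le_trans Hmul (mulr_le0 H1 H2); rewrite ltxx.
have k0 : (0 < `|a1|)%N by rewrite absz_gt0.
case: n Hsum => [|n] Hsum /=; first by rewrite /= in Hsum; lia.
rewrite /= in Hsum; subst n.
set k := `|a1|%N in Hne k0 *.
set b := (0 < a1)%R.
have -> : [set A : {set 'I_(`|a1| + `|a2|).+1 * 'I_(`|a1| + `|a2|).+1}
            | is_path_of_type (@TT _) a1 a2 A]
        = (@path_arcs _ a1 a2) @: [set p | valid b p].
  apply/setP => A; rewrite inE /is_path_of_type a10 a20 sg /=.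
  rewrite (_ : ((0 < a1)%R != ~~ (0 < a1)%R) = true) /=; last by case: (0 < a1)%R.
  apply/existsP/imsetP.
    case=> p /and3P [Hinj /eqP HA Hall]; exists p => //.
    by rewrite inE /valid Hinj /= -arcTT // -HA.
  case=> p; rewrite inE => /andP [Hinj Hall] HA; exists p.
  by rewrite Hinj HA eqxx arcTT.
rewrite card_in_imset ?count_valid //.
move=> p q; rewrite !inE => vp vq E.
apply: (arcs_inj k0 Hne vp vq) => x y.
by rewrite -!und_arcs E.
Qed.
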